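(* Let $G$ be a directed acyclic graph with edge partition into pages including three pages $\mathtt{Red}$, $\mathtt{Blue}$, $\mathtt{Green}$, and let $\pi$ be a valid ordering of $(G,P)$. Suppose $G$ contains distinct vertices $l,\alpha,\omega,a',b',c',h,a'',b'',c''$ and the edges $(l,\alpha),(l,\omega)\in\mathtt{Red}$; $(\alpha,a'),(\alpha,b'),(\omega,b'),(\omega,c')\in\mathtt{Blue}$; $(a',h),(b',h),(c',h)\in\mathtt{Green}$; and $(a',a''),(b',b''),(c',c'')\in\mathtt{Red}$. If $\pi(h)<\min(\pi(a''),\pi(b''),\pi(c''))$, then either $\pi(a'')<\pi(b'')<\pi(c'')$ or $\pi(c'')<\pi(b'')<\pi(a'')$.
   Context: For a DAG $G$ with a partition $P$ of its edges into pages, a valid ordering is a linear ordering $\pi$ of the vertices that is a topological order ($\pi(u)<\pi(v)$ for each edge $(u,v)$) and such that no two edges in the same page cross; edges with endpoints $p_1,q_1$ and $p_2,q_2$ (with $\pi(p_t)<\pi(q_t)$, all four distinct) cross iff $\pi(p_1)<\pi(p_2)<\pi(q_1)<\pi(q_2)$ or $\pi(p_2)<\pi(p_1)<\pi(q_2)<\pi(q_1)$. *)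

(* Defs.v *)
From mathcomp Require Import all_boot.
Set Implicit Arguments. Unset Strict Implicit. Unset Printing Implicit Defensive.

Definition acyclic (V : finType) (E : rel V) : Prop :=
  forall u v, E u v -> ~~ connect E v u.

(* A partition of the edges into pages (page labels of type P) is a function
   assigning to each edge (u,v) its page [page u v]; only its values on edges
   matter. *)

Definition cross (V : Type) (pi : V -> nat) (p1 q1 p2 q2 : V) : bool :=
  ((pi p1 < pi p2) && (pi p2 < pi q1) && (pi q1 < pi q2)) ||
  ((pi p2 < pi p1) && (pi p1 < pi q2) && (pi q2 < pi q1)).

Definition valid_ordering (V : finType) (P : Type) (E : rel V)
    (page : V -> V -> P) (pi : V -> nat) : Prop :=
  injective pi /\
  (forall u v, E u v -> pi u < pi v) /\
  (forall p1 q1 p2 q2, E p1 q1 -> E p2 q2 -> page p1 q1 = page p2 q2 ->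
     uniq [:: p1; q1; p2; q2] -> ~~ cross pi p1 q1 p2 q2).

(* Main.v *)
Require Import Defs.
From mathcomp Require Import all_boot.
From mathcomp Require Import zify.

Lemma nc {V : finType} {P : Type} {E : rel V} {page : V -> V -> P} {f : V -> nat}
  {p1 q1 p2 q2 : V} : valid_ordering E page f -> E p1 q1 -> E p2 q2 ->
  page p1 q1 = page p2 q2 -> uniq [:: p1; q1; p2; q2] ->
  ~ ((f p1 < f p2) /\ (f p2 < f q1) /\ (f q1 < f q2)) /\
  ~ ((f p2 < f p1) /\ (f p1 < f q2) /\ (f q2 < f q1)).
Proof.
move=> [_ [_ H]] e1 e2 pg u; have := H _ _ _ _ e1 e2 pg u.
rewrite /cross negb_or => /andP [h1 h2]; split => -[x [y z]].
  by move: h1; rewrite x y z.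
by move: h2; rewrite x y z.
Qed.

Ltac ctac := first [assumption | rewrite eq_sym; assumption].
Ltac uq := rewrite /= !inE !negb_or ?andbT;
  repeat (apply/andP; split); try assumption; rewrite eq_sym; assumption.

Theorem lemma1 (V : finType) (P : Type) (E : rel V) (page : V -> V -> P)
    (Red Blue Green : P) (pi : V -> nat)
    (l alpha omega a' b' c' h a'' b'' c'' : V) :
  acyclic E ->
  Red <> Blue -> Red <> Green -> Blue <> Green ->
  valid_ordering E page pi ->
  uniq [:: l; alpha; omega; a'; b'; c'; h; a''; b''; c''] ->
  E l alpha -> page l alpha = Red ->
  E l omega -> page l omega = Red ->
  E alpha a' -> page alpha a' = Blue ->
  E alpha b' -> page alpha b' = Blue ->
  E omega b' -> page omega b' = Blue ->
  E omega c' -> page omega c' = Blue ->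
  E a' h -> page a' h = Green ->
  E b' h -> page b' h = Green ->
  E c' h -> page c' h = Green ->
  E a' a'' -> page a' a'' = Red ->
  E b' b'' -> page b' b'' = Red ->
  E c' c'' -> page c' c'' = Red ->
  pi h < minn (pi a'') (minn (pi b'') (pi c'')) ->
  ((pi a'' < pi b'') && (pi b'' < pi c'')) \/
  ((pi c'' < pi b'') && (pi b'' < pi a'')).
Proof.
move=> _ _ _ _ vo Hu e1 p1 e2 p2 e3 p3 e4 p4 e5 p5 e6 p6 e7 p7 e8 p8 e9 p9 e10 p10 e11 p11 e12 p12 hm.
move: Hu; rewrite /= !inE !negb_or -!andbA.
do 45 case/andP => ?.

have [inj [to _]] := vo.
have dp : forall u v, u != v -> pi u != pi v.
  by move=> u v; apply: contra => /eqP/inj ->.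
have t1 := to _ _ e1. have t2 := to _ _ e2. have t3 := to _ _ e3. have t4 := to _ _ e4.
have t5 := to _ _ e5. have t6 := to _ _ e6. have t7 := to _ _ e7. have t8 := to _ _ e8.
have t9 := to _ _ e9. have t10 := to _ _ e10. have t11 := to _ _ e11. have t12 := to _ _ e12.
move: hm; rewrite !leq_min => /andP [m1 /andP [m2 m3]].
have N1 := nc vo e1 e12 (etrans p1 (esym p12)) ltac:(uq).
have N2 := nc vo e2 e10 (etrans p2 (esym p10)) ltac:(uq).
have N3 := nc vo e10 e11 (etrans p10 (esym p11)) ltac:(uq).
have N4 := nc vo e11 e12 (etrans p11 (esym p12)) ltac:(uq).
have N5 := nc vo e3 e5 (etrans p3 (esym p5)) ltac:(uq).
have N6 := nc vo e4 e6 (etrans p4 (esym p6)) ltac:(uq).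
have d0 := dp alpha omega ltac:(ctac).
have d1 := dp b' c' ltac:(ctac).
have d2 := dp a' omega ltac:(ctac).
have d3 := dp a' b' ltac:(ctac).
have d4 := dp b'' c'' ltac:(ctac).
have d5 := dp a'' b'' ltac:(ctac).
have d6 := dp c' alpha ltac:(ctac).
have d7 := dp b' c' ltac:(ctac).
have d8 := dp a'' b'' ltac:(ctac).
have d9 := dp b'' c'' ltac:(ctac).
case: (ltngtP (pi alpha) (pi omega)) => H; last by rewrite H eqxx in d0.
-   have s1 : pi c' < pi b' by clear -N6 H t1 t2 t3 t4 t5 t6 d1; lia.
  have s2 : pi omega < pi a' by clear -N2 t1 t2 t3 t4 t5 t6 t7 t8 t9 t10 t11 t12 m1 m2 m3 d2; lia.
  have s3 : pi b' < pi a' by clear -N5 H s2 d3 t3 t4 t5; lia.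
  have s4 : pi b'' < pi c'' by clear -N4 s1 t7 t8 t9 t10 t11 t12 m1 m2 m3 d4; lia.
  have s5 : pi a'' < pi b'' by clear -N3 s3 t7 t8 t9 t10 t11 t12 m1 m2 m3 d5; lia.
  by left; apply/andP.
-   have s1 : pi a' < pi b' by clear -N5 H t1 t2 t3 t4 t5 t6 d3; lia.
  have s2 : pi alpha < pi c' by clear -N1 t1 t2 t3 t4 t5 t6 t7 t8 t9 t10 t11 t12 m1 m2 m3 d6; lia.
  have s3 : pi b' < pi c' by clear -N6 H s2 d7 t3 t4 t5 t6; lia.
  have s4 : pi b'' < pi a'' by clear -N3 s1 t7 t8 t9 t10 t11 t12 m1 m2 m3 d8; lia.
  have s5 : pi c'' < pi b'' by clear -N4 s3 t7 t8 t9 t10 t11 t12 m1 m2 m3 d9; lia.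
  by right; apply/andP.
Qed.
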